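(* Let $\mu,\mu',\nu$ be subdistributions over closed nondeterministic expressions and $\alpha$ an action such that $\nu\simeq\mu$ (lifted weak congruence) and $\mu\xrightarrow{\alpha}\mu'$ (combined transition). Then there exists $\nu'$ such that $\nu\xRightarrow{\alpha}\nu'$ and $\nu'\approx\mu'$.
   Context: Fix a set $\mathsf{Act}$ of actions containing $\tau$. Nondeterministic expressions: $E ::= 0 \mid X \mid \alpha.P \mid \mathrm{rec}\,X.E \mid E + E$; probabilistic expressions: $P ::= \partial(E) \mid P \oplus_p P$ ($0<p<1$); closed means no free variables. Subdistributions $\mu$ over $S$: $\mu:S\to\mathbb R_{\ge0}$, $|\mu|\le1$; $\delta_s$ Dirac. Semantics: least relations with $\partial(E)\mapsto\delta_E$; $P\oplus_pQ\mapsto p\mu+(1-p)\nu$ if $P\mapsto\mu,Q\mapsto\nu$; $\alpha.P\xrightarrow{\alpha}\mu$ if $P\mapsto\mu$; $\mathrm{rec}\,X.E\xrightarrow{\alpha}\mu$ if $E[\mathrm{rec}\,X.E/X]\xrightarrow{\alpha}\mu$; $E+F\xrightarrow{\alpha}\mu$ and $F+E\xrightarrow{\alpha}\mu$ if $E\xrightarrow{\alpha}\mu$. Combined transitions on subdistributions: least relation with $\delta_E\xrightarrow{\alpha}\mu$ if $E\xrightarrow{\alpha}\mu$, closed under $\sum p_i\nu_i\xrightarrow{\alpha}\sum p_i\mu_i$ ($\nu_i\xrightarrow{\alpha}\mu_i$, $p_i\ge0$, $\sum p_i\le1$). A derivation is $(\mu_i^{\to},\mu_i^{\times})_{i\in\mathbb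 N}$ with $\mu_i^{\to}\xrightarrow{\tau}\mu^{\to}_{i+1}+\mu^{\times}_{i+1}$; $\mu\Rightarrow\nu$ iff a derivation has $\mu=\mu_0^{\to}+\mu_0^{\times}$, $\nu=\sum_i\mu_i^\times$. $\mu\xRightarrow{\alpha}\nu$ iff $\mu\Rightarrow\xrightarrow{\alpha}\Rightarrow\nu$; $\xRightarrow{\hat\alpha}$ is $\Rightarrow$ for $\alpha=\tau$ and $\xRightarrow{\alpha}$ otherwise. Lifting of a relation $\mathcal R$ on expressions to subdistributions: least relation with $\delta_E\mathcal R\delta_F$ for $E\mathcal RF$, closed under $\sum p_i\mu_i\mathcal R\sum p_i\nu_i$ ($\mu_i\mathcal R\nu_i$, $p_i\ge0$, $\sum p_i\le1$). Weak bisimulation: relation $\mathcal R$ on closed expressions such that if $E\mathcal RF$ and $E\xrightarrow{\alpha}\mu$ then $F\xRightarrow{\hat\alpha}\nu$ with $\mu\mathcal R\nu$, and symmetrically; $\approx$ is weak bisimilarity. Closed $E,F$ are weakly congruent, $E\simeq F$, iff $E\xrightarrow{\alpha}\mu$ implies $F\xRightarrow{\alpha}\nu$ with $\mu\approx\nu$, and $F\xrightarrow{\alpha}\nu$ implies $E\xRightarrow{\alpha}\mu$ with $\mu\approx\nu$. *)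

(* Defs.v *)
From Stdlib Require Import Reals List ClassicalEpsilon.
Import ListNotations.
Open Scope R_scope.

Set Implicit Arguments.

Inductive nexp (A : Type) : Type :=
  | NNil : nexp A
  | NVar : nat -> nexp A
  | NPre : A -> pexp A -> nexp A
  | NRec : nat -> nexp A -> nexp A
  | NSum : nexp A -> nexp A -> nexp A
with pexp (A : Type) : Type :=
  | PDelta : nexp A -> pexp A
  | PChoice : forall p : R, 0 < p < 1 -> pexp A -> pexp A -> pexp A.

Arguments NNil {A}.
Arguments NVar {A} _.
Arguments PChoice {A} p _ _ _.

Fixpoint nfree {A : Type} (x : nat) (E : nexp A) : Prop :=
  match E with
  | NNil => False
  | NVar y => x = y
  | NPre _ P => pfree x P
  | NRec y E' => x <> y /\ nfree x E'
  | NSum E1 E2 => nfree x E1 \/ nfree x E2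
  end
with pfree {A : Type} (x : nat) (P : pexp A) : Prop :=
  match P with
  | PDelta E => nfree x E
  | PChoice _ _ P1 P2 => pfree x P1 \/ pfree x P2
  end.

Definition closed {A : Type} (E : nexp A) : Prop := forall x, ~ nfree x E.

(* substitution E[G/x]; only ever used with G closed, so no capture issue *)
Fixpoint nsubst {A : Type} (x : nat) (G : nexp A) (E : nexp A) : nexp A :=
  match E with
  | NNil => NNil
  | NVar y => if Nat.eqb x y then G else NVar y
  | NPre a P => NPre a (psubst x G P)
  | NRec y E' => if Nat.eqb x y then NRec y E' else NRec y (nsubst x G E')
  | NSum E1 E2 => NSum (nsubst x G E1) (nsubst x G E2)
  end
with psubst {A : Type} (x : nat) (G : nexp A) (P : pexp A) : pexp A :=
  match P with
  | PDelta E => PDelta (nsubst x G E)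
  | PChoice p hp P1 P2 => PChoice p hp (psubst x G P1) (psubst x G P2)
  end.

Definition subd (A : Type) := nexp A -> R.

Fixpoint lsum {A : Type} (mu : subd A) (l : list (nexp A)) : R :=
  match l with [] => 0 | E :: l' => mu E + lsum mu l' end.

(* mu : S -> R_{>=0} with |mu| <= 1 (total mass over the countable set of
   expressions: every finite partial sum is at most 1) *)
Definition is_subd {A : Type} (mu : subd A) : Prop :=
  (forall E, 0 <= mu E) /\ (forall l, NoDup l -> lsum mu l <= 1).

Definition subdS {A : Type} (mu : subd A) : Prop :=
  is_subd mu /\ (forall E, mu E <> 0 -> closed E).

Definition dirac {A : Type} (E : nexp A) : subd A :=
  fun F => if excluded_middle_informative (E = F) then 1 else 0.

Definition sadd {A : Type} (mu nu : subd A) : subd A := fun E => mu E + nu E.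
Definition sscale {A : Type} (p : R) (mu : subd A) : subd A := fun E => p * mu E.

Definition weights (p : nat -> R) : Prop :=
  (forall i, 0 <= p i) /\ (forall n, sum_f_R0 p n <= 1).

Definition is_comb {A : Type} (p : nat -> R) (mus : nat -> subd A) (mu0 : subd A) : Prop :=
  forall E, infinite_sum (fun i => p i * mus i E) (mu0 E).

Inductive pstep {A : Type} : pexp A -> subd A -> Prop :=
  | ps_delta : forall E, pstep (PDelta E) (dirac E)
  | ps_choice : forall p hp P Q mu nu,
      pstep P mu -> pstep Q nu ->
      pstep (PChoice p hp P Q) (sadd (sscale p mu) (sscale (1 - p) nu)).

Inductive nstep {A : Type} : nexp A -> A -> subd A -> Prop :=
  | ns_pre : forall a P mu, pstep P mu -> nstep (NPre a P) a mu
  | ns_rec : forall x E a mu,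
      nstep (nsubst x (NRec x E) E) a mu -> nstep (NRec x E) a mu
  | ns_suml : forall E F a mu, nstep E a mu -> nstep (NSum E F) a mu
  | ns_sumr : forall E F a mu, nstep E a mu -> nstep (NSum F E) a mu.

(* combined transitions on subdistributions over closed expressions;
   families are countable (indexed by nat; zero-weight members are irrelevant) *)
Inductive cstep {A : Type} : subd A -> A -> subd A -> Prop :=
  | cs_dirac : forall E a mu, closed E -> nstep E a mu -> cstep (dirac E) a mu
  | cs_comb : forall a (p : nat -> R) (nus mus : nat -> subd A) nu0 mu0,
      weights p ->
      (forall i, 0 < p i -> cstep (nus i) a (mus i)) ->
      is_comb p nus nu0 -> is_comb p mus mu0 ->
      cstep nu0 a mu0.

Definition wtr {A : Type} (tau : A) (mu nu : subd A) : Prop :=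
  exists (mto mx : nat -> subd A),
    (forall i, subdS (mto i) /\ subdS (mx i)) /\
    (forall i, cstep (mto i) tau (sadd (mto (S i)) (mx (S i)))) /\
    mu = sadd (mto 0%nat) (mx 0%nat) /\
    (forall E, infinite_sum (fun i => mx i E) (nu E)).

Definition wtra {A : Type} (tau : A) (mu : subd A) (a : A) (nu : subd A) : Prop :=
  exists mu1 mu2, wtr tau mu mu1 /\ cstep mu1 a mu2 /\ wtr tau mu2 nu.

Definition wtrhat {A : Type} (tau : A) (mu : subd A) (a : A) (nu : subd A) : Prop :=
  (a = tau /\ wtr tau mu nu) \/ (a <> tau /\ wtra tau mu a nu).

Inductive lift {A : Type} (Rel : nexp A -> nexp A -> Prop) : subd A -> subd A -> Prop :=
  | l_dirac : forall E F, Rel E F -> lift Rel (dirac E) (dirac F)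
  | l_comb : forall (p : nat -> R) (mus nus : nat -> subd A) mu0 nu0,
      weights p ->
      (forall i, 0 < p i -> lift Rel (mus i) (nus i)) ->
      is_comb p mus mu0 -> is_comb p nus nu0 ->
      lift Rel mu0 nu0.

Definition weak_bisim {A : Type} (tau : A) (Rel : nexp A -> nexp A -> Prop) : Prop :=
  (forall E F, Rel E F -> closed E /\ closed F) /\
  (forall E F a mu, Rel E F -> nstep E a mu ->
     exists nu, wtrhat tau (dirac F) a nu /\ lift Rel mu nu) /\
  (forall E F a nu, Rel E F -> nstep F a nu ->
     exists mu, wtrhat tau (dirac E) a mu /\ lift Rel mu nu).

Definition wbis {A : Type} (tau : A) (E F : nexp A) : Prop :=
  exists Rel, weak_bisim tau Rel /\ Rel E F.

Definition wcong {A : Type} (tau : A) (E F : nexp A) : Prop :=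
  closed E /\ closed F /\
  (forall a mu, nstep E a mu ->
     exists nu, wtra tau (dirac F) a nu /\ lift (wbis tau) mu nu) /\
  (forall a nu, nstep F a nu ->
     exists mu, wtra tau (dirac E) a mu /\ lift (wbis tau) mu nu).

(* Main.v *)
From Pilot Require Import Defs.
Set Warnings "-notation-overridden,-ambiguous-paths,-parsing,-deprecated".
From Stdlib Require Import Reals Lra ClassicalEpsilon Classical FunctionalExtensionality Cantor.
From mathcomp Require Import all_boot all_order all_algebra.
From mathcomp Require Import boolp classical_sets reals ereal topology normedtype sequences esum Rstruct Rstruct_topology.
Import Order.TTheory GRing.Theory Num.Theory numFieldNormedType.Exports.
Local Open Scope classical_set_scope.
Local Open Scope R_scope.
Definition ES (a : nat -> R) : \bar R := (\sum_(i <oo) (a i)%:E)%E.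

Lemma sumf_big (a : nat -> R) n : sum_f_R0 a n = (\sum_(0 <= i < n.+1) a i)%R.
Proof. elim: n => [|n IH] /=; first by rewrite big_nat1. by rewrite big_nat_recr //= IH. Qed.

Lemma Un_cv_cvg (u : nat -> R) l : Un_cv u l <-> u @ \oo --> l.
Proof.
split.
- move=> H; apply/(@cvgrPdist_lt _ R^o) => e /Rstruct.RltP e0.
  have [N HN] := H e e0. exists N => // n /= /ssrnat.leP Hn.
  have := HN n Hn. rewrite /R_dist Rabs_minus_sym => h. by apply/Rstruct.RltP.
- move=> /(@cvgrPdist_lt _ R^o) H e e0.
  have [N _ HN] := H e (introT Rstruct.RltP e0).
  exists N => n /ssrnat.leP Hn. have /Rstruct.RltP := HN n Hn. by rewrite /R_dist Rabs_minus_sym.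
Qed.

Lemma bridge1 (a : nat -> R) l : infinite_sum a l -> ES a = l%:E.
Proof.
move=> H; apply: cvg_lim => //.
apply/fine_cvgP; split; first by apply: nearW => n; rewrite sumEFin.
have -> : (fine \o (fun n => \sum_(0 <= i < n) (a i)%:E)%E) = (fun n => \sum_(0 <= i < n) a i)%R.
  by apply/funext => n /=; rewrite sumEFin.
rewrite -cvg_shiftS /=.
have -> : (fun n => \sum_(0 <= i < n.+1) a i)%R = sum_f_R0 a by apply/funext => n; rewrite sumf_big.
by apply/Un_cv_cvg.
Qed.

Lemma bridge2 (a : nat -> R) l : (forall n, 0 <= a n) -> ES a = l%:E -> infinite_sum a l.
Proof.
move=> a0 H.
have : cvgn (fun n => \sum_(0 <= i < n) (a i)%:E)%E.
  by apply: is_cvg_nneseries => n _ _; rewrite lee_fin; apply/Rstruct.RleP.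
move=> hc.
have : (fun n => \sum_(0 <= i < n) (a i)%:E)%E @ \oo --> l%:E by rewrite -H; exact: hc.
move=> /fine_cvgP [_].
have -> : (fine \o (fun n => \sum_(0 <= i < n) (a i)%:E)%E) = (fun n => \sum_(0 <= i < n) a i)%R.
  by apply/funext => n /=; rewrite sumEFin.
rewrite -cvg_shiftS /=.
have -> : (fun n => \sum_(0 <= i < n.+1) a i)%R = sum_f_R0 a by apply/funext => n; rewrite sumf_big.
by move/Un_cv_cvg.
Qed.

Lemma RleE (x y : R) : (x <= y) -> (x <= y)%R. Proof. by move/Rstruct.RleP. Qed.

Lemma ES_ge0 (a : nat -> R) : (forall n, 0 <= a n) -> (0 <= ES a)%E.
Proof. move=> a0; apply: nneseries_ge0 => n _ _; rewrite lee_fin; exact: RleE. Qed.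

Lemma ES_le (a b : nat -> R) : (forall n, 0 <= a n) -> (forall n, a n <= b n) -> (ES a <= ES b)%E.
Proof.
move=> a0 ab; apply: lee_nneseries.
- by move=> n _ _; rewrite lee_fin; exact: RleE.
- by move=> n _; rewrite lee_fin; exact: RleE.
Qed.

Lemma ES_ext (a b : nat -> R) : (forall n, a n = b n) -> ES a = ES b.
Proof. by move=> h; rewrite /ES; apply/congr_lim/funext => n; apply: eq_bigr => i _; rewrite h. Qed.

Lemma ES_scale (c : R) (a : nat -> R) : (forall n, 0 <= a n) ->
  ES (fun n => c * a n) = (c%:E * ES a)%E.
Proof.
move=> a0; rewrite /ES -nneseriesZl; last by move=> i _; rewrite lee_fin; exact: RleE.
by apply/congr_lim/funext => n; apply: eq_bigr => i _; rewrite EFinM.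
Qed.

Lemma ES_add (a b : nat -> R) : (forall n, 0 <= a n) -> (forall n, 0 <= b n) ->
  ES (fun n => a n + b n) = (ES a + ES b)%E.
Proof.
move=> a0 b0; rewrite /ES -nneseriesD; last first.
- by move=> i _ _; rewrite lee_fin; exact: RleE.
- by move=> i _ _; rewrite lee_fin; exact: RleE.
by apply/congr_lim/funext => n; apply: eq_bigr => i _; rewrite EFinD.
Qed.

Lemma ES_zero (a : nat -> R) : (forall n, a n = 0) -> ES a = 0%E.
Proof.
move=> h; rewrite (@ES_ext a (fun _ => 0)) //.
by rewrite /ES eseries0.
Qed.

Lemma ES_single (x : R) (a : nat -> R) : a 0%nat = x -> (forall n, a (S n) = 0) -> ES a = x%:E.
Proof.
move=> h0 hS; apply: bridge1 => e e0; exists 0%nat => n _.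
have -> : sum_f_R0 a n = x.
  elim: n => [|n IH] /=; first by [].
  by rewrite IH hS Rplus_0_r.
by rewrite /R_dist Rminus_diag Rabs_R0.
Qed.

Lemma ES_interchange (f : nat -> nat -> R) : (forall i j, 0 <= f i j) ->
  (\sum_(i <oo) ES (f i) = \sum_(j <oo) ES (fun i => f i j))%E.
Proof.
move=> f0; rewrite /ES.
have := @nneseries_interchange R (fun i j => (f i j)%:E) xpredT xpredT.
apply => i j; rewrite lee_fin; exact: RleE.
Qed.

Lemma ES_pair (f : nat -> nat -> R) : (forall i j, 0 <= f i j) ->
  ES (fun n => f (Cantor.of_nat n).1 (Cantor.of_nat n).2) = (\sum_(i <oo) ES (f i))%E.
Proof.
move=> f0.
have f0' : forall i j, (0 <= (f i j)%:E)%E by move=> i j; rewrite lee_fin; exact: RleE.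
rewrite /ES nneseries_esumT; last by move=> n; apply: f0'.
rewrite nneseries_esumT; last by move=> n; apply: nneseries_ge0 => k _ _; apply: f0'.
under [X in _ = X]eq_esum => i _ do rewrite nneseries_esumT //.
rewrite (@esum_esum R nat nat setT (fun _ => setT) (fun i j => (f i j)%:E)); last by move=> *; apply: f0'.
rewrite (reindex_esum [set: nat] (setT `*`` (fun _ => setT)) Cantor.of_nat (fun p => (f p.1 p.2)%:E)) //.
split.
- by move=> n _.
- by move=> m n _ _ h; rewrite -(Cantor.cancel_to_of m) -(Cantor.cancel_to_of n) h.
- move=> [i j] _; exists (Cantor.to_nat (i, j)) => //; by rewrite Cantor.cancel_of_to.
Qed.

Lemma esum_ext (g h : nat -> \bar R) : (forall i, g i = h i) ->
  (\sum_(i <oo) g i = \sum_(i <oo) h i)%E.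
Proof. by move=> e; apply/congr_lim/funext => n; apply: eq_bigr => i _; rewrite e. Qed.

Lemma ES_term_le (a : nat -> R) k : (forall n, 0 <= a n) -> ((a k)%:E <= ES a)%E.
Proof.
move=> a0; apply: (@le_trans _ _ (\sum_(0 <= i < k.+1) (a i)%:E)%E).
  rewrite big_nat_recr //= leeDr //; apply: sume_ge0 => i _; rewrite lee_fin; exact: RleE.
by apply: nneseries_lim_ge => i _ _; rewrite lee_fin; exact: RleE.
Qed.

Lemma ES_nz (a : nat -> R) : ES a <> 0%E -> exists k, a k <> 0.
Proof.
move=> h; apply: NNPP => hn; apply: h; apply: ES_zero => n.
apply: NNPP => hk; apply: hn; by exists n.
Qed.

Lemma ES_fineK (a : nat -> R) : (forall n, 0 <= a n) -> (ES a <= 1%:E)%E ->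
  ES a = (fine (ES a))%:E.
Proof.
move=> a0 a1; rewrite fineK //; rewrite ge0_fin_numE; last exact: ES_ge0.
by apply: (le_lt_trans a1); apply: ltry.
Qed.

Lemma weights_ES (p : nat -> R) : weights p -> (forall i, 0 <= p i) /\ (ES p <= 1%:E)%E.
Proof.
move=> [p0 p1]; split => //.
apply: lime_le; first by apply: is_cvg_nneseries => n _ _; rewrite lee_fin; exact: RleE.
apply: nearW => n; case: n => [|n]; first by rewrite big_geq // lee_fin; apply: RleE; lra.
by rewrite sumEFin -sumf_big lee_fin; apply: RleE.
Qed.

Lemma ES_weights (p : nat -> R) : (forall i, 0 <= p i) -> (ES p <= 1%:E)%E -> weights p.
Proof.
move=> p0 p1; split => // n; rewrite sumf_big.
have : ((\sum_(0 <= i < n.+1) p i)%R%:E <= ES p)%E.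
  by rewrite -sumEFin; apply: nneseries_lim_ge => i _ _; rewrite lee_fin; exact: RleE.
move=> h; have := le_trans h p1; rewrite lee_fin => /Rstruct.RleP; done.
Qed.

Lemma choice_nat {T : Type} (P : nat -> T -> Prop) : (forall n, exists t, P n t) ->
  exists f : nat -> T, forall n, P n (f n).
Proof.
move=> H; exists (fun n => proj1_sig (cid (H n))).
move=> n; exact: proj2_sig (cid (H n)).
Qed.

Lemma dirac_same {A} (E : nexp A) : dirac E E = 1.
Proof. rewrite /dirac; case: excluded_middle_informative => //. Qed.

Lemma dirac_diff {A} (E F : nexp A) : E <> F -> dirac E F = 0.
Proof. rewrite /dirac; case: excluded_middle_informative => //. Qed.

Lemma dirac_sym {A} (E F : nexp A) : dirac E F = dirac F E.
Proof.
rewrite /dirac; do 2 case: excluded_middle_informative => //.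
- by move=> h1 h2; exfalso; apply: h1; rewrite h2.
- by move=> h1 h2; exfalso; apply: h2; rewrite h1.
Qed.

Lemma dirac_ge0 {A} (E F : nexp A) : 0 <= dirac E F.
Proof. rewrite /dirac; case: excluded_middle_informative => _; lra. Qed.

Lemma dirac_le1 {A} (E F : nexp A) : dirac E F <= 1.
Proof. rewrite /dirac; case: excluded_middle_informative => _; lra. Qed.

Lemma lsum_ge0 {A} (mu : subd A) l : (forall E, 0 <= mu E) -> 0 <= lsum mu l.
Proof. move=> h; elim: l => [|E l IH] /=; [lra| have := h E; lra]. Qed.

Lemma lsum_scale {A} (mu : subd A) c l : lsum (fun E => c * mu E) l = c * lsum mu l.
Proof. elim: l => [|E l IH] /=; [ring| rewrite IH; ring]. Qed.

Lemma lsum_add {A} (mu nu : subd A) l : lsum (sadd mu nu) l = lsum mu l + lsum nu l.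
Proof. elim: l => [|E l IH] /=; [ring| rewrite IH /sadd; ring]. Qed.

Lemma lsum_dirac_notin {A} (F : nexp A) l : ~ List.In F l -> lsum (dirac F) l = 0.
Proof.
elim: l => [|E l IH] //= h.
rewrite dirac_diff; last by move=> e; apply: h; left.
rewrite IH; [ring| by move=> hh; apply: h; right].
Qed.

Lemma lsum_dirac_le {A} (F : nexp A) l : List.NoDup l -> lsum (dirac F) l <= 1.
Proof.
elim: l => [|E l IH] /= h; first lra.
inversion h as [|x l0 hn hd]; subst.
case: (excluded_middle_informative (F = E)) => e.
- subst; rewrite dirac_same lsum_dirac_notin //; lra.
- rewrite dirac_diff //; have := IH hd; lra.
Qed.

Lemma is_subd_dirac {A} (E : nexp A) : is_subd (dirac E).
Proof. split; [move=> F; exact: dirac_ge0| move=> l; exact: lsum_dirac_le]. Qed.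

Lemma subd_le1 {A} (mu : subd A) E : is_subd mu -> mu E <= 1.
Proof.
move=> [_ h]; have := h (E :: nil); rewrite /=; move=> h1.
have : List.NoDup (E :: nil) by constructor; [done| constructor].
move/h1; lra.
Qed.

Lemma lsum_EFin {A} (mu : subd A) l : (lsum mu l)%:E = (\sum_(E <- l) (mu E)%:E)%E.
Proof. elim: l => [|E l IH] /=; first by rewrite big_nil. by rewrite big_cons EFinD IH. Qed.

Lemma ES_lsum {A} (f : nat -> subd A) l : (forall k E, 0 <= f k E) ->
  ES (fun k => lsum (f k) l) = (\sum_(E <- l) ES (fun k => f k E))%E.
Proof.
move=> f0; elim: l => [|E l IH] /=.
- by rewrite big_nil; apply: ES_zero.
- rewrite big_cons -IH ES_add //; move=> n; exact: lsum_ge0.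
Qed.

Lemma pstep_subd {A} (P : pexp A) mu : pstep P mu -> is_subd mu.
Proof.
elim=> [E|p hp P0 Q mu0 nu0 _ [m0 m1] _ [n0 n1]]; first exact: is_subd_dirac.
split.
- move=> E; rewrite /sadd /sscale; have := m0 E; have := n0 E; case: hp => *; nra.
- move=> l hl; rewrite lsum_add; rewrite /sscale (lsum_scale mu0) (lsum_scale nu0).
  have := m1 l hl; have := n1 l hl; have := lsum_ge0 mu0 l m0; have := lsum_ge0 nu0 l n0.
  case: hp => *; nra.
Qed.

Lemma nstep_subd {A} (E : nexp A) a mu : nstep E a mu -> is_subd mu.
Proof. elim=> // a0 P mu0 h; exact: pstep_subd h. Qed.

Lemma ES_rep_subd {A} (w : nat -> R) (f : nat -> subd A) (x : subd A) :
  (forall k, 0 <= w k) -> (ES w <= 1%:E)%E -> (forall k, 0 < w k -> is_subd (f k)) ->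
  (forall k E, 0 <= w k * f k E) ->
  (forall E, ES (fun k => w k * f k E) = (x E)%:E) -> is_subd x.
Proof.
move=> w0 w1 fs f0 hx; split.
- move=> E; have := @ES_ge0 (fun k => w k * f k E) (fun k => f0 k E); rewrite hx lee_fin => /Rstruct.RleP; done.
- move=> l hl.
  have h1 : (lsum x l)%:E = ES (fun k => w k * lsum (f k) l).
    rewrite lsum_EFin; under eq_bigr => E _ do rewrite -hx.
    rewrite -ES_lsum //; apply: ES_ext => k; by rewrite lsum_scale.
  pose g := fun k => w k * lsum (f k) l.
  have h2 : (ES g <= ES w)%E.
    apply: ES_le; rewrite /g.
    + move=> k; rewrite -lsum_scale; exact: lsum_ge0.
    + move=> k; case: (Rlt_dec 0 (w k)) => h.
      * have := (fs k h).2 l hl; have := w0 k; nra.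
      * have -> : w k = 0 by have := w0 k; lra.
        lra.
  have := le_trans h2 w1; rewrite -h1 lee_fin => /Rstruct.RleP; done.
Qed.

Lemma ES_rep_closed {A} (w : nat -> R) (f : nat -> subd A) (x : subd A) :
  (forall k, 0 <= w k) -> (forall k E, 0 < w k -> f k E <> 0 -> Defs.closed E) ->
  (forall E, ES (fun k => w k * f k E) = (x E)%:E) -> forall E, x E <> 0 -> Defs.closed E.
Proof.
move=> w0 hc hx E hE.
have : ES (fun k => w k * f k E) <> 0%E by rewrite hx => /eqP; rewrite eqe => /eqP.
case/ES_nz => k hk.
apply: (hc k).
- have := w0 k; case: (Req_EM_T (w k) 0) => e; [by rewrite e in hk; lra | lra].
- by move=> e; rewrite e Rmult_0_r in hk.
Qed.

Definition flatP {A} (B : nexp A -> subd A -> Prop) (x y : subd A) (w : nat -> R)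
  (Es : nat -> nexp A) (Xs : nat -> subd A) : Prop :=
  (forall k, 0 <= w k) /\ (ES w <= 1%:E)%E /\ (forall k, 0 < w k -> B (Es k) (Xs k)) /\
  (forall k E, 0 <= Xs k E) /\
  (forall E, ES (fun k => w k * dirac (Es k) E) = (x E)%:E) /\
  (forall E, ES (fun k => w k * Xs k E) = (y E)%:E).

Definition flat {A} (B : nexp A -> subd A -> Prop) (x y : subd A) : Prop :=
  exists w Es Xs, flatP B x y w Es Xs.

Lemma flat_dirac {A} (B : nexp A -> subd A -> Prop) E X :
  (forall F, 0 <= X F) -> B E X -> flat B (dirac E) X.
Proof.
move=> X0 hB; exists (fun k => if k is 0%nat then 1 else 0), (fun _ => E), (fun _ => X).
split; [by case=> *; lra|]. split.
  by rewrite (@ES_single 1) //; rewrite lee_fin; apply: RleE; lra.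
split; [by case=> // k; lra|]. split; first by [].
split=> F; apply: ES_single => [|n] /=; ring.
Qed.

Lemma ES_comb (p : nat -> R) (W g : nat -> nat -> R) (m : nat -> R) (M : R) :
  (forall i, 0 <= p i) -> (forall i j, 0 <= W i j) -> (forall i j, 0 <= g i j) ->
  (forall i, 0 < p i -> ES (fun j => W i j * g i j) = (m i)%:E) ->
  ES (fun i => p i * m i) = M%:E ->
  ES (fun n => p (Cantor.of_nat n).1 * W (Cantor.of_nat n).1 (Cantor.of_nat n).2
               * g (Cantor.of_nat n).1 (Cantor.of_nat n).2) = M%:E.
Proof.
move=> p0 W0 g0 hm hM.
have := ES_pair (fun i j => p i * W i j * g i j); rewrite /= => ->; last first.
  by move=> i j; apply: Rmult_le_pos; [apply: Rmult_le_pos|].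
rewrite -hM /ES; apply: esum_ext => i.
rewrite -/(ES _) (@ES_ext _ (fun j => p i * (W i j * g i j))); last by move=> j; ring.
rewrite ES_scale; last by move=> j; apply: Rmult_le_pos.
case: (Rlt_dec 0 (p i)) => h.
- by rewrite hm // EFinM.
- have -> : p i = 0 by have := p0 i; lra.
  by rewrite mul0e Rmult_0_l.
Qed.

Lemma flat_comb {A} (B : nexp A -> subd A -> Prop) (p : nat -> R) (x y : nat -> subd A) x0 y0 :
  weights p -> (forall i, 0 < p i -> flat B (x i) (y i)) ->
  is_comb p x x0 -> is_comb p y y0 -> flat B x0 y0.
Proof.
move=> /weights_ES [p0 p1] Hf Hx Hy.
have : forall i, exists t : (nat -> R) * (nat -> nexp A) * (nat -> subd A),
    (0 < p i -> flatP B (x i) (y i) t.1.1 t.1.2 t.2) /\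
    (forall k, 0 <= t.1.1 k) /\ (forall k E, 0 <= t.2 k E).
  move=> i; case: (Rlt_dec 0 (p i)) => h.
  - have [w [Es [Xs H]]] := Hf i h; exists (w, Es, Xs); split => //.
    by case: H => [h1 [_ [_ [h4 _]]]].
  - exists (fun _ => 0, fun _ => NNil, fun _ _ => 0); split => //=; split=> *; lra.
case/choice_nat => T HT.
pose W := fun i => (T i).1.1. pose EE := fun i => (T i).1.2. pose XX := fun i => (T i).2.
have W0 : forall i j, 0 <= W i j by move=> i j; exact: (HT i).2.1.
have X0 : forall i j E, 0 <= XX i j E by move=> i j; exact: (HT i).2.2.
have HF : forall i, 0 < p i -> flatP B (x i) (y i) (W i) (EE i) (XX i) by move=> i; exact: (HT i).1.
exists (fun n => p (Cantor.of_nat n).1 * W (Cantor.of_nat n).1 (Cantor.of_nat n).2),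
  (fun n => EE (Cantor.of_nat n).1 (Cantor.of_nat n).2),
  (fun n => XX (Cantor.of_nat n).1 (Cantor.of_nat n).2).
split; first by move=> n; apply: Rmult_le_pos.
split.
  have := ES_pair (fun i j => p i * W i j); rewrite /= => ->; last first.
    by move=> i j; apply: Rmult_le_pos.
  apply: le_trans p1; rewrite /ES; apply: lee_nneseries.
    by move=> i _ _; apply: ES_ge0 => j; apply: Rmult_le_pos.
  move=> i _; rewrite -/(ES _) ES_scale //.
  case: (Rlt_dec 0 (p i)) => h.
  - rewrite -[X in (_ <= X)%E]mule1; apply: lee_wpmul2l.
      by rewrite lee_fin; apply: RleE.
    by have [_ [hh _]] := HF i h.
  - have -> : p i = 0 by have := p0 i; lra.
    by rewrite mul0e.
split.
  move=> n /= hn.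
  have hp : 0 < p (Cantor.of_nat n).1.
    case: (Rlt_dec 0 (p (Cantor.of_nat n).1)) => // h.
    have e : p (Cantor.of_nat n).1 = 0 by have := p0 (Cantor.of_nat n).1; lra.
    by rewrite e Rmult_0_l in hn; lra.
  have [_ [_ [hB _]]] := HF _ hp; apply: hB.
  case: (Rlt_dec 0 (W (Cantor.of_nat n).1 (Cantor.of_nat n).2)) => // h.
  have e : W (Cantor.of_nat n).1 (Cantor.of_nat n).2 = 0.
    by have := W0 (Cantor.of_nat n).1 (Cantor.of_nat n).2; lra.
  by rewrite e Rmult_0_r in hn; lra.
split; first by move=> n E; apply: X0.
split=> E.
- apply: (@ES_comb p W (fun i j => dirac (EE i j) E) (fun i => x i E)) => //.
  + move=> i j; exact: dirac_ge0.
  + by move=> i h; have [_ [_ [_ [_ [hh _]]]]] := HF i h; apply: hh.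
  + exact: bridge1.
- apply: (@ES_comb p W (fun i j => XX i j E) (fun i => y i E)) => //.
  + by move=> i h; have [_ [_ [_ [_ [_ hh]]]]] := HF i h; apply: hh.
  + exact: bridge1.
Qed.

Definition Bl {A} (Rel : nexp A -> nexp A -> Prop) : nexp A -> subd A -> Prop :=
  fun F X => exists E, X = dirac E /\ Rel F E.
Definition Bc {A} (a : A) : nexp A -> subd A -> Prop :=
  fun E X => Defs.closed E /\ nstep E a X.

Lemma lift_flat {A} (Rel : nexp A -> nexp A -> Prop) x y : Defs.lift Rel x y -> flat (Bl Rel) x y.
Proof.
elim=> [E F h|p mus nus mu0 nu0 hw _ IH hm hn].
- apply: flat_dirac; first by move=> G; exact: dirac_ge0.
  by exists F.
- exact: (flat_comb _ _ _ _ _ _ hw IH hm hn).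
Qed.

Lemma cstep_flat {A} (x y : subd A) a : cstep x a y -> flat (Bc a) x y.
Proof.
elim=> [E a0 mu hc hs|a0 p nus mus nu0 mu0 hw _ IH hn hm].
- apply: flat_dirac; first by move=> G; exact: (nstep_subd _ _ _ hs).1.
  by split.
- exact: (flat_comb _ _ _ _ _ _ hw IH hn hm).
Qed.

Lemma flat_lift {A} (Rel : nexp A -> nexp A -> Prop) x y : flat (Bl Rel) x y -> Defs.lift Rel x y.
Proof.
move=> [w [Es [Xs [w0 [w1 [hB [hX [hx hy]]]]]]]].
apply: (@l_comb _ _ w (fun k => dirac (Es k)) Xs).
- exact: ES_weights.
- by move=> k /hB [E [-> h]]; apply: l_dirac.
- move=> E; apply: bridge2; last exact: hx.
  by move=> k; apply: Rmult_le_pos; [|exact: dirac_ge0].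
- move=> E; apply: bridge2; last exact: hy.
  by move=> k; apply: Rmult_le_pos.
Qed.

Lemma flat_subdS_l {A} (B : nexp A -> subd A -> Prop) x y :
  (forall E X, B E X -> Defs.closed E) -> flat B x y -> subdS x.
Proof.
move=> hc [w [Es [Xs [w0 [w1 [hB [hX [hx hy]]]]]]]]; split.
- apply: (@ES_rep_subd _ w (fun k => dirac (Es k))) => //.
  + by move=> k _; exact: is_subd_dirac.
  + by move=> k E; apply: Rmult_le_pos; [|exact: dirac_ge0].
- apply: (@ES_rep_closed _ w (fun k => dirac (Es k))) => // k E hk hd.
  case: (excluded_middle_informative (Es k = E)) => e.
  + by rewrite -e; apply: (hc _ (Xs k)); apply: hB.
  + by exfalso; apply: hd; apply: dirac_diff.
Qed.

Lemma flat_subd_r {A} (B : nexp A -> subd A -> Prop) x y :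
  (forall E X, B E X -> is_subd X) -> flat B x y -> is_subd y.
Proof.
move=> hs [w [Es [Xs [w0 [w1 [hB [hX [hx hy]]]]]]]].
apply: (@ES_rep_subd _ w Xs) => //.
- by move=> k h; apply: (hs (Es k)); apply: hB.
- by move=> k E; apply: Rmult_le_pos.
Qed.

Lemma cstep_subd {A} (x y : subd A) a : cstep x a y -> is_subd x /\ is_subd y.
Proof.
move=> hc; have h := cstep_flat _ _ _ hc; split.
- by have := flat_subdS_l _ _ _ (fun E X (hb : Bc a E X) => hb.1) h; case.
- by apply: (flat_subd_r _ _ _ _ h) => E X [_ hs]; exact: (nstep_subd _ _ _ hs).
Qed.

Definition combo {A} (c : nat -> R) (f : nat -> subd A) : subd A :=
  fun E => fine (ES (fun n => c n * f n E)).

Lemma combo_spec {A} (c : nat -> R) (f : nat -> subd A) :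
  (forall n, 0 <= c n) -> (ES c <= 1%:E)%E -> (forall n, 0 < c n -> is_subd (f n)) ->
  (forall n E, 0 <= c n * f n E) /\
  (forall E, ES (fun n => c n * f n E) = (combo c f E)%:E) /\ is_subd (combo c f).
Proof.
move=> c0 c1 fs.
have h0 : forall n E, 0 <= c n * f n E.
  move=> n E; case: (Rlt_dec 0 (c n)) => h.
  - apply: Rmult_le_pos; [lra| exact: (fs n h).1].
  - have -> : c n = 0 by have := c0 n; lra.
    lra.
have h1 : forall E, ES (fun n => c n * f n E) = (combo c f E)%:E.
  move=> E; rewrite /combo; apply: ES_fineK => //.
  apply: le_trans c1; apply: ES_le => // n.
  case: (Rlt_dec 0 (c n)) => h.
  - have := subd_le1 (f n) E (fs n h); have := (fs n h).1 E; nra.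
  - have -> : c n = 0 by have := c0 n; lra.
    lra.
split; [done|split; [done|]].
exact: (@ES_rep_subd _ c f).
Qed.

Lemma combo_closed {A} (c : nat -> R) (f : nat -> subd A) :
  (forall n, 0 <= c n) -> (forall E, ES (fun n => c n * f n E) = (combo c f E)%:E) ->
  (forall n, 0 < c n -> forall E, f n E <> 0 -> Defs.closed E) ->
  forall E, combo c f E <> 0 -> Defs.closed E.
Proof. move=> c0 h hc; apply: (@ES_rep_closed _ c f) => // k E hk; exact: hc. Qed.

Lemma wtr_comb {A} (tau : A) (c : nat -> R) (x z : nat -> subd A) (x0 z0 : subd A) :
  (forall n, 0 <= c n) -> (ES c <= 1%:E)%E -> (forall n, 0 < c n -> wtr tau (x n) (z n)) ->
  (forall E, ES (fun n => c n * x n E) = (x0 E)%:E) ->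
  (forall E, ES (fun n => c n * z n E) = (z0 E)%:E) -> wtr tau x0 z0.
Proof.
move=> c0 c1 hw hx hz.
have : forall n, exists D : (nat -> subd A) * (nat -> subd A), 0 < c n ->
   (forall i, subdS (D.1 i) /\ subdS (D.2 i)) /\
   (forall i, cstep (D.1 i) tau (sadd (D.1 (S i)) (D.2 (S i)))) /\
   x n = sadd (D.1 0%nat) (D.2 0%nat) /\
   (forall E, infinite_sum (fun i => D.2 i E) (z n E)).
  move=> n; case: (Rlt_dec 0 (c n)) => h.
  - by have [mto [mx H]] := hw n h; exists (mto, mx).
  - by exists (fun _ _ => 0, fun _ _ => 0).
case/choice_nat => D HD.
pose MT n i := (D n).1 i. pose MX n i := (D n).2 i.
have sT : forall i, (forall n E, 0 <= c n * MT n i E) /\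
   (forall E, ES (fun n => c n * MT n i E) = (combo c (fun n => MT n i) E)%:E) /\
   is_subd (combo c (fun n => MT n i)).
  move=> i; apply: combo_spec => // n h; exact: ((HD n h).1 i).1.1.
have sX : forall i, (forall n E, 0 <= c n * MX n i E) /\
   (forall E, ES (fun n => c n * MX n i E) = (combo c (fun n => MX n i) E)%:E) /\
   is_subd (combo c (fun n => MX n i)).
  move=> i; apply: combo_spec => // n h; exact: ((HD n h).1 i).2.1.
exists (fun i => combo c (fun n => MT n i)), (fun i => combo c (fun n => MX n i)).
split; [|split; [|split]].
- move=> i; split; split.
  + exact: (sT i).2.2.
  + apply: (combo_closed _ _ c0 (sT i).2.1) => n h; exact: ((HD n h).1 i).1.2.
  + exact: (sX i).2.2.
  + apply: (combo_closed _ _ c0 (sX i).2.1) => n h; exact: ((HD n h).1 i).2.2.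
- move=> i.
  apply: (@cs_comb _ tau c (fun n => MT n i) (fun n => sadd (MT n (S i)) (MX n (S i)))).
  + exact: ES_weights.
  + move=> n h; exact: ((HD n h).2.1 i).
  + move=> E; apply: bridge2; [by move=> ?; apply: (sT i).1| exact: (sT i).2.1].
  + move=> E; apply: bridge2.
    * move=> n; rewrite /sadd Rmult_plus_distr_l; apply: Rplus_le_le_0_compat.
      apply: (sT (S i)).1. apply: (sX (S i)).1.
    * rewrite (@ES_ext _ (fun n => c n * MT n (S i) E + c n * MX n (S i) E)); last first.
        by move=> n; rewrite /sadd Rmult_plus_distr_l.
      rewrite ES_add; [|by move=> ?; apply: (sT (S i)).1|by move=> ?; apply: (sX (S i)).1].
      by rewrite (sT (S i)).2.1 (sX (S i)).2.1 /sadd EFinD.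
- apply: functional_extensionality => E.
  suff : (x0 E)%:E = (sadd (combo c (fun n => MT n 0%nat)) (combo c (fun n => MX n 0%nat)) E)%:E.
    by move=> [].
  rewrite -hx (@ES_ext _ (fun n => c n * MT n 0%nat E + c n * MX n 0%nat E)); last first.
    move=> n; case: (Rlt_dec 0 (c n)) => h.
    - by rewrite (HD n h).2.2.1 /sadd Rmult_plus_distr_l.
    - have -> : c n = 0 by have := c0 n; lra.
      ring.
  rewrite ES_add; [|by move=> ?; apply: (sT 0%nat).1|by move=> ?; apply: (sX 0%nat).1].
  by rewrite (sT 0%nat).2.1 (sX 0%nat).2.1 /sadd EFinD.
- move=> E; apply: bridge2.
    by move=> i; exact: ((sX i).2.2.1 E).
  rewrite -hz.
  pose g := fun i n => c n * MX n i E.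
  transitivity (\sum_(i <oo) ES (g i))%E.
    by rewrite /ES; apply: esum_ext => i; rewrite -(sX i).2.1.
  rewrite (ES_interchange g); last first.
    by move=> i n; apply: (sX i).1.
  rewrite /ES; apply: esum_ext => n; rewrite -/(ES _).
  case: (Rlt_dec 0 (c n)) => h.
  - rewrite ES_scale; last by move=> i; exact: (((HD n h).1 i).2.1.1 E).
    by rewrite /MX (bridge1 _ _ ((HD n h).2.2.2 E)) EFinM.
  - have e : c n = 0 by have := c0 n; lra.
    rewrite e Rmult_0_l; apply: ES_zero => i; rewrite /g e; ring.
Qed.

Lemma wtra_comb {A} (tau a : A) (c : nat -> R) (x y : nat -> subd A) (x0 y0 : subd A) :
  (forall n, 0 <= c n) -> (ES c <= 1%:E)%E -> (forall n, 0 < c n -> wtra tau (x n) a (y n)) ->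
  (forall E, ES (fun n => c n * x n E) = (x0 E)%:E) ->
  (forall E, ES (fun n => c n * y n E) = (y0 E)%:E) -> wtra tau x0 a y0.
Proof.
move=> c0 c1 hw hx hy.
have : forall n, exists D : subd A * subd A, 0 < c n ->
   wtr tau (x n) D.1 /\ cstep D.1 a D.2 /\ wtr tau D.2 (y n).
  move=> n; case: (Rlt_dec 0 (c n)) => h.
  - by have [m1 [m2 H]] := hw n h; exists (m1, m2).
  - by exists (fun _ => 0, fun _ => 0).
case/choice_nat => D HD.
have s1 := @combo_spec _ c (fun n => (D n).1) c0 c1
  (fun n h => (cstep_subd _ _ _ (HD n h).2.1).1).
have s2 := @combo_spec _ c (fun n => (D n).2) c0 c1
  (fun n h => (cstep_subd _ _ _ (HD n h).2.1).2).
exists (combo c (fun n => (D n).1)), (combo c (fun n => (D n).2)).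
split; [|split].
- apply: (wtr_comb _ _ _ _ _ _ c0 c1 _ hx s1.2.1) => n h; exact: (HD n h).1.
- apply: (@cs_comb _ a c (fun n => (D n).1) (fun n => (D n).2)).
  + exact: ES_weights.
  + move=> n h; exact: (HD n h).2.1.
  + move=> E; apply: bridge2; [by move=> ?; apply: s1.1| exact: s1.2.1].
  + move=> E; apply: bridge2; [by move=> ?; apply: s2.1| exact: s2.2.1].
- apply: (wtr_comb _ _ _ _ _ _ c0 c1 _ s2.2.1 hy) => n h; exact: (HD n h).2.2.
Qed.

Lemma wbis_closed {A} (tau : A) (E F : nexp A) : wbis tau E F -> Defs.closed E.
Proof. by move=> [Rel [[hc _] h]]; exact: (hc _ _ h).1. Qed.

Import Pilot.Defs.

Theorem mainTheorem13 (A : Type) (tau : A) (mu mu' nu : subd A) (a : A) :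
  subdS mu -> subdS mu' -> subdS nu ->
  lift (wcong tau) nu mu ->
  cstep mu a mu' ->
  exists nu', subdS nu' /\ wtra tau nu a nu' /\ lift (wbis tau) nu' mu'.
Proof.
move=> _ _ _ hl hc.
have [w [Fs [Xs [w0 [w1 [hB [hX [hnu hmu0]]]]]]]] := lift_flat _ _ _ hl.
have [q [Gs [rh [q0 [q1 [hBc [hr [hmu hmu']]]]]]]] := cstep_flat _ _ _ hc.
have : forall k, exists E : nexp A, 0 < w k -> Xs k = dirac E /\ wcong tau (Fs k) E.
  move=> k; case: (Rlt_dec 0 (w k)) => h.
  - have [E hE] := hB k h; by exists E.
  - by exists NNil.
case/choice_nat => Es HEs.
have hmu2 : forall E, ES (fun k => w k * dirac (Es k) E) = (mu E)%:E.
  move=> E; rewrite -hmu0; apply: ES_ext => k.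
  case: (Rlt_dec 0 (w k)) => h; first by rewrite (HEs k h).1.
  have -> : w k = 0 by have := w0 k; lra.
  ring.
have nn1 : forall E k, 0 <= w k * dirac (Es k) E.
  by move=> E k; apply: Rmult_le_pos; [exact: w0|exact: dirac_ge0].
have nn2 : forall E j, 0 <= q j * dirac (Gs j) E.
  by move=> E j; apply: Rmult_le_pos; [exact: q0|exact: dirac_ge0].
have wle : forall k, w k <= mu (Es k).
  move=> k; have := @ES_term_le (fun k' => w k' * dirac (Es k') (Es k)) k (nn1 (Es k)).
  by rewrite hmu2 dirac_same Rmult_1_r lee_fin => /Rstruct.RleP.
have qle : forall j, q j <= mu (Gs j).
  move=> j; have := @ES_term_le (fun j' => q j' * dirac (Gs j') (Gs j)) j (nn2 (Gs j)).
  by rewrite hmu dirac_same Rmult_1_r lee_fin => /Rstruct.RleP.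
pose c k j := (w k / mu (Es k)) * (q j * dirac (Gs j) (Es k)).
have c0 : forall k j, 0 <= c k j.
  move=> k j; apply: Rmult_le_pos; last exact: nn2.
  case: (Req_EM_T (mu (Es k)) 0) => e.
  - have -> : w k = 0 by have := w0 k; have := wle k; lra.
    rewrite /Rdiv Rmult_0_l; lra.
  - rewrite /Rdiv; apply: Rmult_le_pos; [exact: w0|]. left; apply: Rinv_0_lt_compat. have := w0 k; have := wle k; lra.
have cA : forall k, ES (c k) = (w k)%:E.
  move=> k; rewrite /c ES_scale; last exact: nn2.
  rewrite hmu -EFinM -RmultE; congr EFin.
  case: (Req_EM_T (mu (Es k)) 0) => e.
  - have -> : w k = 0 by have := w0 k; have := wle k; lra.
    rewrite /Rdiv; ring.
  - by field.
have cB : forall j, ES (fun k => c k j) = (q j)%:E.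
  move=> j; rewrite (@ES_ext _ (fun k => (q j / mu (Gs j)) * (w k * dirac (Es k) (Gs j)))); last first.
    move=> k; rewrite /c; case: (excluded_middle_informative (Gs j = Es k)) => e.
    - by rewrite e !dirac_same /Rdiv; ring.
    - rewrite dirac_diff // dirac_diff; first ring.
      by move=> h; apply: e.
  rewrite ES_scale; last exact: nn1.
  rewrite hmu2 -EFinM -RmultE; congr EFin.
  case: (Req_EM_T (mu (Gs j)) 0) => e.
  - have -> : q j = 0 by have := q0 j; have := qle j; lra.
    rewrite /Rdiv; ring.
  - by field.
have cpos : forall k j, 0 < c k j -> 0 < w k /\ 0 < q j /\ Es k = Gs j.
  move=> k j h; split; [|split].
  - case: (Rlt_dec 0 (w k)) => // h1; exfalso.
    have e : w k = 0 by have := w0 k; lra.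
    by move: h; rewrite /c e /Rdiv !Rmult_0_l; lra.
  - case: (Rlt_dec 0 (q j)) => // h1; exfalso.
    have e : q j = 0 by have := q0 j; lra.
    by move: h; rewrite /c e !Rmult_0_l Rmult_0_r; lra.
  - case: (excluded_middle_informative (Es k = Gs j)) => // e; exfalso.
    move: h; rewrite /c dirac_diff; last by move=> h; apply: e.
    rewrite !Rmult_0_r; lra.
pose kk n := (Cantor.of_nat n).1. pose jj n := (Cantor.of_nat n).2.
pose c' n := c (kk n) (jj n).
have : forall n, exists nn : subd A, 0 < c' n ->
    wtra tau (dirac (Fs (kk n))) a nn /\ Defs.lift (wbis tau) nn (rh (jj n)).
  move=> n; case: (Rlt_dec 0 (c' n)) => h.
  - have [hw [hq he]] := cpos _ _ h.
    have [_ hs] := hBc _ hq.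
    have [_ [_ [_ h4]]] := (HEs (kk n) hw).2.
    have hs' : nstep (Es (kk n)) a (rh (jj n)) by rewrite he.
    have [m [hm1 hm2]] := h4 a (rh (jj n)) hs'.
    by exists m.
  - by exists (fun _ => 0) => h'; exfalso; lra.
case/choice_nat => V HV.
have c'0 : forall n, 0 <= c' n by move=> n; exact: c0.
have c'1 : (ES c' <= 1%:E)%E.
  rewrite /c' /kk /jj (ES_pair c c0); apply: le_trans w1; rewrite le_eqVlt; apply/orP; left; apply/eqP.
  by rewrite /ES; apply: esum_ext => k; rewrite -/(ES _) cA.
have Vsubd : forall n, 0 < c' n -> subdS (V n).
  move=> n h; apply: (flat_subdS_l _ _ _ _ (lift_flat _ _ _ (HV n h).2)).
  by move=> F X [E [_ hw]]; exact: wbis_closed hw.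
have sV := @combo_spec _ c' V c'0 c'1 (fun n h => (Vsubd n h).1).
exists (combo c' V).
have F2 : forall E, ES (fun n => c' n * rh (jj n) E) = (mu' E)%:E.
  move=> E; rewrite /c' /kk /jj.
  have := ES_pair (fun k j => c k j * rh j E); rewrite /= => ->; last first.
    by move=> k j; apply: Rmult_le_pos.
  rewrite (ES_interchange (fun k j => c k j * rh j E)); last first.
    by move=> k j; apply: Rmult_le_pos.
  rewrite -hmu' /ES; apply: esum_ext => j; rewrite -/(ES _).
  rewrite (@ES_ext _ (fun i => rh j E * c i j)); last by move=> i; ring.
  by rewrite ES_scale // cB -EFinM -RmultE Rmult_comm.
have F3 : forall E, ES (fun n => c' n * dirac (Fs (kk n)) E) = (nu E)%:E.
  move=> E; rewrite /c' /kk /jj.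
  have := ES_pair (fun k j => c k j * dirac (Fs k) E); rewrite /= => ->; last first.
    by move=> k j; apply: Rmult_le_pos; [|exact: dirac_ge0].
  rewrite -hnu /ES; apply: esum_ext => k; rewrite -/(ES _).
  rewrite (@ES_ext _ (fun j => dirac (Fs k) E * c k j)); last by move=> i; ring.
  by rewrite ES_scale // cA -EFinM -RmultE Rmult_comm.
have hlift : Defs.lift (wbis tau) (combo c' V) mu'.
  apply: (@l_comb _ _ c' V (fun n => rh (jj n))).
  - exact: ES_weights.
  - by move=> n h; exact: (HV n h).2.
  - by move=> E; apply: bridge2; [move=> n; exact: sV.1| exact: sV.2.1].
  - move=> E; apply: bridge2; last exact: F2.
    by move=> n; apply: Rmult_le_pos.
split; [|split] => //.
- split; first exact: sV.2.2.
  apply: (combo_closed _ _ c'0 sV.2.1) => n h; exact: (Vsubd n h).2.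
- apply: (wtra_comb _ _ _ _ _ _ _ c'0 c'1 _ F3 sV.2.1) => n h; exact: (HV n h).1.
Qed.
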